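(* Fix $n\ge2$, $1\le m\le n-1$. For every $\sigma\ge0$ and every eigenfunction $u_m(\cdot;\sigma)$ for $\lambda_m(\sigma)$, and every $1\le k\le n$, $$F_{k,m}(\sigma)=n\pi(-1)^{k+1}\,\frac{u_m(x_k;\sigma)+u_m(x_{k-1};\sigma)}{n^2\pi^2-\lambda_m(\sigma)}.$$ In particular, $F_{1,m}(\sigma)\neq0$, and if for each $\sigma\ge 0$ the eigenfunction $u_m(\cdot;\sigma)$ is normalized so that $F_{1,m}(\sigma)=1$, then for each $1\le k\le n$ the quantity $F_{k,m}(\sigma)$ is independent of $\sigma\in[0,\infty)$.
   Context: Fix an integer $n\ge2$. Set $x_k=k/n$ for $0\le k\le n$ and $I_k=[x_{k-1},x_k]$ for $1\le k\le n$. For $\sigma\ge 0$, the spectral flow problem is the eigenvalue problem of finding $\lambda\in\mathbb{R}$ and a nonzero continuous function $u:[0,1]\to\mathbb{R}$, smooth on each open interval $(x_{k-1},x_k)$, such that $-u''=\lambda u$ on each $(x_{k-1},x_k)$, $u(0)=u(1)=0$, and for each $1\le k\le n-1$: $u$ is continuous at $x_k$ and $u'(x_k^+)-u'(x_k^-)=\sigma\,u(x_k)$, where $\pm$ denote right/left one-sided limits. For each $\sigma\ge0$ the eigenvalues are real, positive and simple, and are listed increasingly as $\lambda_1(\sigma)<\lambda_2(\sigma)<\cdots$; at $\sigma=0$, $\lambda_m(0)=m^2\pi^2$ with eigenfunction $\sin(m\pi x)$. We write $u_m(x;\sigma)$ for an eigenfunction associated with $\lambda_m(\sigma)$. Define $F_{k,m}(\sigma)=\int_{I_k}u_m(x;\sigma)\sin(n\pi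 x)\,dx$. *)

(* Defs.v *)
From Stdlib Require Import Reals Lra List.
From Coquelicot Require Import Coquelicot.
Open Scope R_scope.

Definition xk (n k : nat) : R := INR k / INR n.

Definition cont_on_01 (u : R -> R) : Prop :=
  forall x, 0 <= x <= 1 ->
    filterlim u (within (fun y => 0 <= y <= 1) (locally x)) (locally (u x)).

Definition is_eigenfunction (n : nat) (sigma lam : R) (u : R -> R) : Prop :=
  (exists x, 0 <= x <= 1 /\ u x <> 0) /\
  cont_on_01 u /\
  (forall k : nat, (1 <= k <= n)%nat ->
     forall x, xk n (k - 1) < x < xk n k ->
       (forall j : nat, ex_derive_n u j x) /\
       - Derive_n u 2 x = lam * u x) /\
  u 0 = 0 /\ u 1 = 0 /\
  (* delta-interaction jump conditions at interior grid points *)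
  (forall k : nat, (1 <= k <= n - 1)%nat ->
     exists dl dr : R,
       filterlim (Derive u) (at_left (xk n k)) (locally dl) /\
       filterlim (Derive u) (at_right (xk n k)) (locally dr) /\
       dr - dl = sigma * u (xk n k)).

Definition is_eigenvalue (n : nat) (sigma lam : R) : Prop :=
  exists u, is_eigenfunction n sigma lam u.

Definition is_mth_eigenvalue (n : nat) (sigma : R) (m : nat) (lam : R) : Prop :=
  is_eigenvalue n sigma lam /\
  exists l : list R, NoDup l /\ length l = (m - 1)%nat /\
    forall mu, In mu l <-> (is_eigenvalue n sigma mu /\ mu < lam).

Definition Fk (n k : nat) (u : R -> R) : R :=
  RInt (fun x => u x * sin (INR n * PI * x)) (xk n (k - 1)) (xk n k).

(* Main.v *)
Require Import Defs.
From Stdlib Require Import Reals Lra List Lia ZArith.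
From Coquelicot Require Import Coquelicot.
Open Scope R_scope.


Definition ch (a : R) := (exp a + exp (- a)) / 2.
Definition sh (a : R) := (exp a - exp (- a)) / 2.

Definition Cf (l t : R) : R :=
  if Rlt_dec 0 l then cos (sqrt l * t)
  else if Rlt_dec l 0 then ch (sqrt (- l) * t) else 1.
Definition Sf (l t : R) : R :=
  if Rlt_dec 0 l then sin (sqrt l * t) / sqrt l
  else if Rlt_dec l 0 then sh (sqrt (- l) * t) / sqrt (- l) else t.

Lemma exp_inv_prod a : exp a * exp (- a) = 1.
Proof. rewrite <- exp_plus. replace (a + - a) with 0 by ring. apply exp_0. Qed.

Lemma Cf_deriv l t : is_derive (Cf l) t (- l * Sf l t).
Proof.
  unfold Cf, Sf; destruct (Rlt_dec 0 l) as [H|H].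
  - assert (Hs : 0 < sqrt l) by (apply sqrt_lt_R0; lra).
    auto_derive; auto. replace l with (sqrt l * sqrt l) at 3 by (apply sqrt_sqrt; lra).
    field. lra.
  - destruct (Rlt_dec l 0) as [H'|H'].
    + assert (Hs : 0 < sqrt (-l)) by (apply sqrt_lt_R0; lra).
      unfold ch, sh. auto_derive; auto.
      set (mu := sqrt (- l)) in *. assert (Hm : - l = mu * mu) by (unfold mu; rewrite sqrt_sqrt; lra).
      rewrite Hm. field. lra.
    + assert (l = 0) by lra. subst. auto_derive; auto. ring.
Qed.

Lemma Sf_deriv l t : is_derive (Sf l) t (Cf l t).
Proof.
  unfold Cf, Sf; destruct (Rlt_dec 0 l) as [H|H].
  - assert (Hs : 0 < sqrt l) by (apply sqrt_lt_R0; lra).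
    auto_derive; auto. field. lra.
  - destruct (Rlt_dec l 0) as [H'|H'].
    + assert (Hs : 0 < sqrt (-l)) by (apply sqrt_lt_R0; lra).
      unfold ch, sh. auto_derive; auto. field. lra.
    + auto_derive; auto.
Qed.

Lemma CS_id l t : Cf l t ^ 2 + l * Sf l t ^ 2 = 1.
Proof.
  unfold Cf, Sf; destruct (Rlt_dec 0 l) as [H|H].
  - assert (Hs : 0 < sqrt l) by (apply sqrt_lt_R0; lra).
    set (mu := sqrt l) in *. assert (Hm : l = mu * mu) by (unfold mu; rewrite sqrt_sqrt; lra).
    rewrite Hm. pose proof (sin2_cos2 (mu * t)). unfold Rsqr in *. field_simplify; [|lra]. nra.
  - destruct (Rlt_dec l 0) as [H'|H'].
    + assert (Hs : 0 < sqrt (-l)) by (apply sqrt_lt_R0; lra).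
      set (mu := sqrt (- l)) in *. assert (Hm : l = - (mu * mu)) by (unfold mu; rewrite sqrt_sqrt; lra).
      rewrite Hm. unfold ch, sh. pose proof (exp_inv_prod (mu * t)) as He.
      field_simplify; [|lra]. rewrite (Rmult_assoc 16), He. field. lra.
    + assert (l = 0) by lra. subst. ring.
Qed.

Lemma CS_0 l : Cf l 0 = 1 /\ Sf l 0 = 0.
Proof.
  unfold Cf, Sf; destruct (Rlt_dec 0 l) as [H|H].
  - rewrite Rmult_0_r, cos_0, sin_0. split; [auto|]. unfold Rdiv; ring.
  - destruct (Rlt_dec l 0) as [H'|H']; [|split; reflexivity].
    unfold ch, sh. rewrite Rmult_0_r, Ropp_0, exp_0. split; [field|unfold Rdiv; ring].
Qed.

Lemma CS_nonpos l t : l <= 0 -> 0 <= t -> 1 <= Cf l t /\ 0 <= Sf l t.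
Proof.
  intros Hl Ht. unfold Cf, Sf; destruct (Rlt_dec 0 l) as [H|H]; [lra|].
  destruct (Rlt_dec l 0) as [H'|H']; [|lra].
  assert (Hs : 0 < sqrt (-l)) by (apply sqrt_lt_R0; lra).
  assert (Hle : exp (- (sqrt (- l) * t)) <= exp (sqrt (- l) * t)).
  { destruct (Req_dec t 0). subst. rewrite Rmult_0_r, Ropp_0. lra.
    left. apply exp_increasing. nra. }
  pose proof (exp_inv_prod (sqrt (- l) * t)).
  pose proof (exp_pos (sqrt (- l) * t)). pose proof (exp_pos (- (sqrt (- l) * t))).
  unfold ch, sh. split.
  - nra.
  - apply Rdiv_le_0_compat; lra.
Qed.

Lemma Sf_pos l t : 0 < t -> l * t ^ 2 < PI ^ 2 -> 0 < Sf l t.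
Proof.
  intros Ht Hl. unfold Sf; destruct (Rlt_dec 0 l) as [H|H].
  - assert (Hs : 0 < sqrt l) by (apply sqrt_lt_R0; lra).
    apply Rdiv_lt_0_compat; auto. apply sin_gt_0. nra.
    assert (sqrt l * t < PI).
    { pose proof PI_RGT_0. assert ((sqrt l * t)^2 < PI^2).
      { replace ((sqrt l * t)^2) with (sqrt l * sqrt l * t^2) by ring.
        rewrite sqrt_sqrt; lra. }
      nra. }
    lra.
  - destruct (Rlt_dec l 0) as [H'|H']; [|lra].
    assert (Hs : 0 < sqrt (-l)) by (apply sqrt_lt_R0; lra).
    apply Rdiv_lt_0_compat; auto. unfold sh.
    assert (exp (- (sqrt (- l) * t)) < exp (sqrt (- l) * t)) by (apply exp_increasing; nra).
    lra.
Qed.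

Lemma isd_mult f g x df dg : is_derive f x df -> is_derive g x dg ->
  is_derive (fun y => f y * g y) x (df * g x + f x * dg).
Proof. intros H1 H2. apply is_derive_Reals. apply is_derive_Reals in H1, H2.
  apply (derivable_pt_lim_mult f g x df dg H1 H2). Qed.
Lemma isd_plus f g x df dg : is_derive f x df -> is_derive g x dg ->
  is_derive (fun y => f y + g y) x (df + dg).
Proof. intros H1 H2. apply is_derive_Reals. apply is_derive_Reals in H1, H2.
  apply (derivable_pt_lim_plus f g x df dg H1 H2). Qed.
Lemma isd_minus f g x df dg : is_derive f x df -> is_derive g x dg ->
  is_derive (fun y => f y - g y) x (df - dg).
Proof. intros H1 H2. apply is_derive_Reals. apply is_derive_Reals in H1, H2.
  apply (derivable_pt_lim_minus f g x df dg H1 H2). Qed.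
Lemma isd_shift (f : R -> R) a x d : is_derive f (x - a) d -> is_derive (fun y => f (y - a)) x d.
Proof. intros H. apply is_derive_Reals. apply is_derive_Reals in H.
  replace d with (d * 1) by ring.
  apply (derivable_pt_lim_comp (fun y => y - a) f x 1 d); auto.
  replace 1 with (1 - 0) by ring. apply derivable_pt_lim_minus.
  apply derivable_pt_lim_id. apply derivable_pt_lim_const. Qed.
Lemma isd_scal (f : R -> R) k x d : is_derive f x d -> is_derive (fun y => k * f y) x (k * d).
Proof. apply is_derive_scal. Qed.

Lemma const_on (f : R -> R) a b : (forall x, a < x < b -> is_derive f x 0) ->
  forall x y, a < x < b -> a < y < b -> f x = f y.
Proof.
  intros Hd.
  assert (K : forall x y, a < x < b -> a < y < b -> x <= y -> f x = f y).
  { intros x y Hx Hy Hxy.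
    destruct (MVT_gen f x y (fun _ => 0)) as [c [_ Hc]].
    - intros z Hz. apply Hd. unfold Rmin, Rmax in Hz. destruct (Rle_dec x y); lra.
    - intros z Hz. apply continuity_pt_filterlim. apply (ex_derive_continuous (V := R_NormedModule)).
      eexists. apply Hd. unfold Rmin, Rmax in Hz. destruct (Rle_dec x y); lra.
    - lra. }
  intros x y Hx Hy. destruct (Rle_dec x y). auto. symmetry. apply K; auto; lra.
Qed.

Lemma ode_rep (u : R -> R) lam a b :
  (forall x, a < x < b -> ex_derive u x /\ ex_derive (Derive u) x /\
     - Derive (Derive u) x = lam * u x) ->
  a < b ->
  exists al be, forall x, a < x < b ->
     u x = al * Cf lam (x - a) + be * Sf lam (x - a) /\
     Derive u x = - lam * al * Sf lam (x - a) + be * Cf lam (x - a).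
Proof.
  intros Hu Hab.
  set (fa := fun x => u x * Cf lam (x - a) - Derive u x * Sf lam (x - a)).
  set (fb := fun x => lam * (u x * Sf lam (x - a)) + Derive u x * Cf lam (x - a)).
  assert (HC : forall x, is_derive (fun y => Cf lam (y - a)) x (- lam * Sf lam (x - a))).
  { intro x. apply isd_shift. apply Cf_deriv. }
  assert (HS : forall x, is_derive (fun y => Sf lam (y - a)) x (Cf lam (x - a))).
  { intro x. apply isd_shift. apply Sf_deriv. }
  assert (Da : forall x, a < x < b -> is_derive fa x 0).
  { intros x Hx. destruct (Hu x Hx) as [H1 [H2 H3]].
    apply Derive_correct in H1. apply Derive_correct in H2.
    eapply is_derive_ext. intro t. reflexivity.
    evar (d : R). replace 0 with d. apply isd_minus; apply isd_mult; eauto.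
    unfold d. nra. }
  assert (Db : forall x, a < x < b -> is_derive fb x 0).
  { intros x Hx. destruct (Hu x Hx) as [H1 [H2 H3]].
    apply Derive_correct in H1. apply Derive_correct in H2.
    evar (d : R). replace 0 with d. apply isd_plus. apply isd_scal. apply isd_mult; eauto.
    apply isd_mult; eauto.
    unfold d. nra. }
  set (m := (a + b) / 2).
  exists (fa m), (fb m). intros x Hx.
  rewrite (const_on fa a b Da m x) by (unfold m; lra).
  rewrite (const_on fb a b Db m x) by (unfold m; lra).
  unfold fa, fb. pose proof (CS_id lam (x - a)) as HI. split; [rewrite <- (Rmult_1_r (u x)) at 1 | rewrite <- (Rmult_1_r (Derive u x)) at 1]; rewrite <- HI; ring.
Qed.

Lemma ball_R (x e y : R) : ball x e y <-> Rabs (y - x) < e.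
Proof. split; intro H; exact H. Qed.

Lemma cont_eps (g : R -> R) a : continuous g a ->
  forall eps : posreal, exists d : posreal, forall y, Rabs (y - a) < d -> Rabs (g y - g a) < eps.
Proof.
  intros Hg eps. apply filterlim_locally with (eps := eps) in Hg.
  destruct Hg as [d Hd]. exists d. intros y Hy. apply (Hd y). apply ball_R. exact Hy.
Qed.

Lemma key_side f g a b L (s : bool) : a < b ->
  (forall x, a < x < b -> f x = g x) ->
  continuous g (if s then a else b) ->
  (forall eps : posreal, exists d : posreal, forall y, a < y < b ->
      Rabs (y - (if s then a else b)) < d -> Rabs (f y - L) < eps) ->
  L = g (if s then a else b).
Proof.
  intros Hab Hfg Hg Hf. set (p := if s then a else b) in *.
  destruct (Req_dec L (g p)) as [E|E]; auto. exfalso.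
  assert (He : 0 < Rabs (L - g p) / 2).
  { apply Rdiv_lt_0_compat; [apply Rabs_pos_lt; lra | lra]. }
  set (eps := mkposreal _ He).
  destruct (Hf eps) as [d1 H1]. destruct (cont_eps g p Hg eps) as [d2 H2].
  set (r := Rmin (Rmin d1 d2) (b - a) / 2).
  assert (Hr : 0 < r).
  { unfold r. apply Rdiv_lt_0_compat; [|lra]. destruct d1, d2; simpl.
    repeat apply Rmin_glb_lt; lra. }
  pose proof (cond_pos d1); pose proof (cond_pos d2).
  assert (Hr1 : r < d1). { unfold r. pose proof (Rmin_l (Rmin d1 d2) (b-a)). pose proof (Rmin_l d1 d2). lra. }
  assert (Hr2 : r < d2). { unfold r. pose proof (Rmin_l (Rmin d1 d2) (b-a)). pose proof (Rmin_r d1 d2). lra. }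
  assert (Hr3 : r < b - a). { unfold r. pose proof (Rmin_r (Rmin d1 d2) (b-a)). lra. }
  set (y := if s then a + r else b - r).
  assert (Hy : a < y < b) by (unfold y; destruct s; lra).
  assert (Hyp : Rabs (y - p) = r).
  { unfold y, p; destruct s; [rewrite Rabs_pos_eq | rewrite Rabs_left]; lra. }
  specialize (H1 y Hy ltac:(lra)). specialize (H2 y ltac:(lra)).
  rewrite Hfg in H1 by auto. simpl in H1, H2.
  assert (Rabs (L - g p) <= Rabs (g y - L) + Rabs (g y - g p)).
  { replace (L - g p) with (- (g y - L) + (g y - g p)) by ring.
    eapply Rle_trans. apply Rabs_triang. rewrite Rabs_Ropp. lra. }
  lra.
Qed.

Lemma node_val_right u g a b : 0 <= a -> a < b -> b <= 1 -> cont_on_01 u ->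
  (forall x, a < x < b -> u x = g x) -> continuous g a -> u a = g a.
Proof.
  intros H0 Hab H1 Hu Hfg Hg.
  apply (key_side u g a b (u a) true Hab Hfg Hg).
  intros eps. pose proof (Hu a ltac:(lra)) as Hc.
  apply filterlim_locally with (eps := eps) in Hc. destruct Hc as [d Hd].
  exists d. intros y Hy Hyd. apply (Hd y). apply ball_R. exact Hyd. lra.
Qed.

Lemma node_val_left u g a b : 0 <= a -> a < b -> b <= 1 -> cont_on_01 u ->
  (forall x, a < x < b -> u x = g x) -> continuous g b -> u b = g b.
Proof.
  intros H0 Hab H1 Hu Hfg Hg.
  apply (key_side u g a b (u b) false Hab Hfg Hg).
  intros eps. pose proof (Hu b ltac:(lra)) as Hc.
  apply filterlim_locally with (eps := eps) in Hc. destruct Hc as [d Hd].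
  exists d. intros y Hy Hyd. apply (Hd y). apply ball_R. exact Hyd. lra.
Qed.

Lemma lim_right_val (f g : R -> R) a b L : a < b ->
  (forall x, a < x < b -> f x = g x) -> continuous g a ->
  filterlim f (at_right a) (locally L) -> L = g a.
Proof.
  intros Hab Hfg Hg Hf.
  apply (key_side f g a b L true Hab Hfg Hg).
  intros eps. apply filterlim_locally with (eps := eps) in Hf. destruct Hf as [d Hd].
  exists d. intros y Hy Hyd. apply (Hd y). apply ball_R. exact Hyd. lra.
Qed.

Lemma lim_left_val (f g : R -> R) a b L : a < b ->
  (forall x, a < x < b -> f x = g x) -> continuous g b ->
  filterlim f (at_left b) (locally L) -> L = g b.
Proof.
  intros Hab Hfg Hg Hf.
  apply (key_side f g a b L false Hab Hfg Hg).
  intros eps. apply filterlim_locally with (eps := eps) in Hf. destruct Hf as [d Hd].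
  exists d. intros y Hy Hyd. apply (Hd y). apply ball_R. exact Hyd. lra.
Qed.

Lemma xk_step n k : (0 < n)%nat -> (1 <= k)%nat -> xk n k - xk n (k - 1) = 1 / INR n.
Proof.
  intros Hn Hk. unfold xk. rewrite minus_INR by lia. simpl.
  pose proof (lt_0_INR n Hn). field. lra.
Qed.

Lemma xk_0 n : xk n 0 = 0.
Proof. unfold xk. simpl. unfold Rdiv. ring. Qed.

Lemma xk_n n : (0 < n)%nat -> xk n n = 1.
Proof. intros Hn. unfold xk. pose proof (lt_0_INR n Hn). field. lra. Qed.

Lemma xk_bounds n k : (0 < n)%nat -> (k <= n)%nat -> 0 <= xk n k <= 1.
Proof.
  intros Hn Hk. unfold xk. pose proof (lt_0_INR n Hn). pose proof (le_INR _ _ Hk).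
  pose proof (pos_INR k). split.
  - apply Rdiv_le_0_compat; lra.
  - apply Rmult_le_reg_r with (INR n); auto. field_simplify; lra.
Qed.

Lemma xk_lt n k : (0 < n)%nat -> (1 <= k)%nat -> xk n (k - 1) < xk n k.
Proof.
  intros Hn Hk. pose proof (xk_step n k Hn Hk). pose proof (lt_0_INR n Hn).
  assert (0 < 1 / INR n) by (apply Rdiv_lt_0_compat; lra). lra.
Qed.

Lemma cover n x : (0 < n)%nat -> 0 <= x <= 1 ->
  exists k, (1 <= k <= n)%nat /\ xk n (k - 1) <= x <= xk n k.
Proof.
  intros Hn Hx.
  assert (G : forall j, (1 <= j <= n)%nat -> x <= xk n j ->
            exists k, (1 <= k <= j)%nat /\ xk n (k - 1) <= x <= xk n k).
  { induction j as [|j IH]; intros Hj Hxj; [lia|].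
    destruct (Nat.eq_dec j 0) as [E|E].
    - subst. exists 1%nat. split; [lia|]. simpl. rewrite xk_0. lra.
    - destruct (Rle_dec x (xk n j)) as [L|L].
      + destruct (IH ltac:(lia) L) as [k [Hk1 Hk2]]. exists k. split; [lia|auto].
      + exists (S j). split; [lia|]. replace (S j - 1)%nat with j by lia. lra. }
  destruct (G n ltac:(lia) ltac:(rewrite (xk_n n Hn); lra)) as [k Hk]. exists k. split; [lia|tauto].
Qed.

Definition hh n := 1 / INR n.

Lemma cell_rep n sigma lam u k : (0 < n)%nat -> is_eigenfunction n sigma lam u ->
  (1 <= k <= n)%nat ->
  exists be, (forall x, xk n (k - 1) < x < xk n k ->
     u x = u (xk n (k-1)) * Cf lam (x - xk n (k-1)) + be * Sf lam (x - xk n (k-1)) /\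
     Derive u x = - lam * u (xk n (k-1)) * Sf lam (x - xk n (k-1)) + be * Cf lam (x - xk n (k-1))) /\
   u (xk n k) = u (xk n (k-1)) * Cf lam (hh n) + be * Sf lam (hh n).
Proof.
  intros Hn [Hnz [Hc [Hd [H0 [H1 Hj]]]]] Hk.
  set (a := xk n (k - 1)). set (b := xk n k).
  assert (Hab : a < b) by (apply xk_lt; lia).
  assert (Hb : b - a = hh n) by (apply xk_step; lia).
  assert (Ha0 : 0 <= a) by (apply xk_bounds; lia).
  assert (Hb1 : b <= 1) by (apply xk_bounds; lia).
  destruct (ode_rep u lam a b) as [al [be Hr]]; auto.
  { intros x Hx. destruct (Hd k Hk x Hx) as [Hx1 Hx2].
    split; [exact (Hx1 1%nat)|]. split; [exact (Hx1 2%nat)|]. exact Hx2. }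
  set (g := fun x => al * Cf lam (x - a) + be * Sf lam (x - a)).
  assert (Hg : forall p, continuous g p).
  { intro p. apply (ex_derive_continuous (V := R_NormedModule)). eexists.
    apply isd_plus; apply isd_scal; apply isd_shift; [apply Cf_deriv|apply Sf_deriv]. }
  assert (Ea : u a = g a).
  { apply (node_val_right u g a b); auto. intros x Hx; apply Hr; auto. }
  assert (Eb : u b = g b).
  { apply (node_val_left u g a b); auto. intros x Hx; apply Hr; auto. }
  unfold g in Ea, Eb. replace (a - a) with 0 in Ea by ring.
  destruct (CS_0 lam) as [C0 S0]. rewrite C0, S0 in Ea.
  assert (al = u a) by lra. subst al.
  exists be. split; [exact Hr|]. rewrite Eb, Hb. reflexivity.
Qed.

Definition cc n sigma lam := Cf lam (hh n) + sigma * Sf lam (hh n) / 2.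

Lemma dcont lam a al be p : continuous (fun x => - lam * al * Sf lam (x - a) + be * Cf lam (x - a)) p.
Proof.
  apply (ex_derive_continuous (V := R_NormedModule)). eexists.
  apply isd_plus; [|apply isd_scal]; [apply isd_scal|]; apply isd_shift; [apply Sf_deriv|apply Cf_deriv].
Qed.

Lemma recur n sigma lam u k : (0 < n)%nat -> is_eigenfunction n sigma lam u ->
  (1 <= k <= n - 1)%nat ->
  u (xk n (S k)) = 2 * cc n sigma lam * u (xk n k) - u (xk n (k - 1)).
Proof.
  intros Hn He Hk.
  destruct (cell_rep n sigma lam u k Hn He ltac:(lia)) as [b1 [R1 E1]].
  destruct (cell_rep n sigma lam u (S k) Hn He ltac:(lia)) as [b2 [R2 E2]].
  replace (S k - 1)%nat with k in R2, E2 by lia.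
  destruct He as [_ [_ [_ [_ [_ Hj]]]]].
  destruct (Hj k Hk) as [dl [dr [Hl [Hr Hjump]]]].
  assert (Lk : xk n (k-1) < xk n k) by (apply xk_lt; lia).
  assert (Lk2 : xk n k < xk n (S k)) by (pose proof (xk_lt n (S k) Hn ltac:(lia)) as X; replace (S k - 1)%nat with k in X by lia; exact X).
  pose proof (lim_left_val (Derive u) _ _ _ dl Lk (fun x Hx => proj2 (R1 x Hx)) (dcont _ _ _ _ _) Hl) as Edl.
  pose proof (lim_right_val (Derive u) _ _ _ dr Lk2 (fun x Hx => proj2 (R2 x Hx)) (dcont _ _ _ _ _) Hr) as Edr.
  cbv beta in Edl, Edr. rewrite (xk_step n k Hn ltac:(lia)) in Edl. fold (hh n) in Edl.
  replace (xk n k - xk n k) with 0 in Edr by ring.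
  destruct (CS_0 lam) as [C0 S0]. rewrite C0, S0 in Edr.
  pose proof (CS_id lam (hh n)) as HI.
  unfold cc. rewrite E2, E1.
  set (Cv := Cf lam (hh n)) in *. set (Sv := Sf lam (hh n)) in *.
  set (U0 := u (xk n (k - 1))) in *.
  assert (b2 = dr) by lra. subst b2.
  assert (dr = dl + sigma * (U0 * Cv + b1 * Sv)) by (rewrite <- E1; lra).
  rewrite H. rewrite Edl.
  transitivity (2 * (Cv + sigma * Sv / 2) * (U0 * Cv + b1 * Sv) - U0 * (Cv ^ 2 + lam * Sv ^ 2)). field. rewrite HI; field.
Qed.

Fixpoint P (c : R) (k : nat) : R :=
  match k with
  | O => 0
  | S O => 1
  | S ((S k'') as k') => 2 * c * P c k' - P c k''
  end.

Lemma seq_P (U : nat -> R) c n : U 0%nat = 0 ->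
  (forall k, (1 <= k <= n - 1)%nat -> U (S k) = 2 * c * U k - U (k - 1)%nat) ->
  forall k, (k <= n)%nat -> U k = U 1%nat * P c k.
Proof.
  intros H0 Hr.
  assert (G : forall k, (S k <= n)%nat -> U k = U 1%nat * P c k /\ U (S k) = U 1%nat * P c (S k)).
  { induction k as [|k IH]; intros Hk.
    - simpl. rewrite H0. split; ring.
    - destruct (IH ltac:(lia)) as [A1 A2]. split; auto.
      rewrite Hr by lia. replace (S k - 1)%nat with k by lia.
      rewrite A1, A2. simpl P at 3. destruct k; simpl; ring. }
  intros k Hk. destruct k. simpl. rewrite H0; ring.
  apply (G k Hk).
Qed.

Lemma P_ge c : 1 <= c -> forall k, INR k <= P c k.
Proof.
  intros Hc.
  assert (G : forall k, INR k <= P c k /\ P c (S k) - P c k >= 1).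
  { induction k as [|k [I1 I2]].
    - simpl. lra.
    - split. rewrite S_INR. lra.
      change (P c (S (S k))) with (2 * c * P c (S k) - P c k).
      assert (0 <= P c (S k)) by (pose proof (pos_INR k); lra). nra. }
  intro k; apply G.
Qed.

Lemma P_sin t : forall k, P (cos t) k * sin t = sin (INR k * t).
Proof.
  assert (G : forall k, P (cos t) k * sin t = sin (INR k * t) /\
                        P (cos t) (S k) * sin t = sin (INR (S k) * t)).
  { induction k as [|k [I1 I2]].
    - change (P (cos t) 0) with 0. change (P (cos t) 1) with 1. change (INR 0) with 0. change (INR 1) with 1.
      rewrite !Rmult_0_l, !Rmult_1_l, sin_0. split; reflexivity.
    - split; auto. change (P (cos t) (S (S k))) with (2 * cos t * P (cos t) (S k) - P (cos t) k).
      replace (INR (S (S k)) * t) with (INR (S k) * t + t) by (rewrite !S_INR; ring).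
      rewrite sin_plus.
      replace (INR k * t) with (INR (S k) * t - t) in I1 by (rewrite S_INR; ring).
      rewrite sin_minus in I1.
      replace ((2 * cos t * P (cos t) (S k) - P (cos t) k) * sin t) with
        (2 * cos t * (P (cos t) (S k) * sin t) - P (cos t) k * sin t) by ring.
      rewrite I1, I2. ring. }
  intro k; apply G.
Qed.

Lemma hh_pos n : (0 < n)%nat -> 0 < hh n.
Proof. intros Hn. unfold hh. apply Rdiv_lt_0_compat. lra. apply lt_0_INR; auto. Qed.

Lemma lam_small n lam : (0 < n)%nat -> lam < INR n ^ 2 * PI ^ 2 -> lam * hh n ^ 2 < PI ^ 2.
Proof.
  intros Hn Hl. pose proof (lt_0_INR n Hn). unfold hh.
  replace (lam * (1 / INR n) ^ 2) with (lam / INR n ^ 2) by (field; lra).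
  apply Rmult_lt_reg_r with (INR n ^ 2). nra.
  field_simplify; [|lra]. lra.
Qed.

Lemma eig_U1 n sigma lam u : (2 <= n)%nat -> is_eigenfunction n sigma lam u ->
  lam < INR n ^ 2 * PI ^ 2 ->
  u (xk n 1) <> 0 /\ P (cc n sigma lam) n = 0 /\
  forall k, (k <= n)%nat -> u (xk n k) = u (xk n 1) * P (cc n sigma lam) k.
Proof.
  intros Hn He Hl.
  assert (Hn0 : (0 < n)%nat) by lia.
  assert (SP : forall k, (k <= n)%nat -> u (xk n k) = u (xk n 1) * P (cc n sigma lam) k).
  { apply (seq_P (fun k => u (xk n k))).
    - simpl. rewrite xk_0. apply He.
    - intros k Hk. apply (recur n sigma lam u k Hn0 He Hk). }
  assert (Un : u (xk n n) = 0) by (rewrite xk_n by auto; apply He).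
  assert (U1 : u (xk n 1) <> 0).
  { intro Z.
    assert (Z2 : forall k, (k <= n)%nat -> u (xk n k) = 0).
    { intros k Hk. rewrite SP, Z by auto. ring. }
    destruct He as [[x [Hx Hux]] Hrest]. apply Hux.
    destruct (cover n x Hn0 Hx) as [k [Hk Hxk]].
    destruct (Req_dec x (xk n (k-1))) as [E1|E1]. rewrite E1; apply Z2; lia.
    destruct (Req_dec x (xk n k)) as [E2|E2]. rewrite E2; apply Z2; lia.
    destruct (cell_rep n sigma lam u k Hn0 (conj (ex_intro _ x (conj Hx Hux)) Hrest) Hk) as [be [R E]].
    rewrite (Z2 (k-1)%nat) in R, E by lia. rewrite (Z2 k) in E by lia.
    assert (0 < Sf lam (hh n)) by (apply Sf_pos; [apply hh_pos; auto| apply lam_small; auto]).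
    assert (be = 0) by nra. subst be.
    rewrite (proj1 (R x ltac:(lra))). ring. }
  split; auto. split; auto.
  rewrite SP in Un by auto.
  apply Rmult_integral in Un. destruct Un; [contradiction|auto].
Qed.

Lemma eig_class n sigma lam u : (2 <= n)%nat -> 0 <= sigma -> is_eigenfunction n sigma lam u ->
  lam < INR n ^ 2 * PI ^ 2 ->
  0 < lam /\ exists j, (1 <= j <= n - 1)%nat /\ cc n sigma lam = cos (INR j * PI / INR n).
Proof.
  intros Hn Hs He Hl.
  assert (Hn0 : (0 < n)%nat) by lia.
  destruct (eig_U1 n sigma lam u Hn He Hl) as [U1 [Pn _]].
  set (c := cc n sigma lam) in *.
  assert (Hc1 : c < 1).
  { destruct (Rlt_dec c 1) as [L|L]; auto. exfalso.
    pose proof (P_ge c ltac:(lra) n). rewrite Pn in H.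
    pose proof (lt_0_INR n Hn0). lra. }
  pose proof (hh_pos n Hn0) as Hh.
  assert (Hlam : 0 < lam).
  { destruct (Rlt_dec 0 lam) as [L|L]; auto. exfalso.
    destruct (CS_nonpos lam (hh n) ltac:(lra) ltac:(lra)).
    unfold c, cc in Hc1. nra. }
  split; auto.
  assert (HS : 0 < Sf lam (hh n)) by (apply Sf_pos; auto; apply lam_small; auto).
  assert (Hcm : -1 < c).
  { unfold c, cc. assert (-1 < Cf lam (hh n)).
    { unfold Cf. destruct (Rlt_dec 0 lam); [|lra].
      assert (Hs0 : 0 < sqrt lam) by (apply sqrt_lt_R0; lra).
      assert (sqrt lam * hh n < PI).
      { pose proof PI_RGT_0. pose proof (lam_small n lam Hn0 Hl).
        assert ((sqrt lam * hh n)^2 < PI^2).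
        { replace ((sqrt lam * hh n)^2) with (sqrt lam * sqrt lam * hh n^2) by ring.
          rewrite sqrt_sqrt; lra. }
        nra. }
      rewrite <- cos_PI. apply cos_decreasing_1; nra. }
    nra. }
  set (th := acos c).
  assert (Ct : cos th = c) by (apply cos_acos; lra).
  pose proof (acos_bound c) as Bt. fold th in Bt.
  assert (Th0 : th <> 0) by (intro E; rewrite E, cos_0 in Ct; lra).
  assert (ThP : th <> PI) by (intro E; rewrite E, cos_PI in Ct; lra).
  assert (Sth : 0 < sin th) by (apply sin_gt_0; lra).
  pose proof (P_sin th n) as PS. rewrite Ct, Pn, Rmult_0_l in PS.
  symmetry in PS. apply sin_eq_0_0 in PS. destruct PS as [z Hz].
  pose proof (lt_0_INR n Hn0) as HnR. pose proof PI_RGT_0.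
  assert (Z1 : 0 < IZR z). { assert (0 < IZR z * PI) by (rewrite <- Hz; nra). nra. }
  assert (Z2 : IZR z < INR n). { assert (IZR z * PI < INR n * PI) by (rewrite <- Hz; nra). nra. }
  apply lt_IZR in Z1. rewrite INR_IZR_INZ in Z2. apply lt_IZR in Z2.
  exists (Z.to_nat z). split; [lia|].
  rewrite INR_IZR_INZ, Z2Nat.id by lia. rewrite <- Hz, <- Ct. f_equal. field. lra.
Qed.

Definition gg n sigma w := cos (w * hh n) + sigma * (sin (w * hh n) / w) / 2.

Lemma cc_gg n sigma lam : 0 < lam -> cc n sigma lam = gg n sigma (sqrt lam).
Proof. intros H. unfold cc, gg, Cf, Sf. destruct (Rlt_dec 0 lam); [reflexivity|lra]. Qed.

Lemma cont_of_deriv (f : R -> R) x d : is_derive f x d -> continuity_pt f x.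
Proof. intros H. apply continuity_pt_filterlim. apply (ex_derive_continuous (V := R_NormedModule)). exists d; auto. Qed.

Lemma sin_tcos t : 0 <= t <= PI -> t * cos t <= sin t.
Proof.
  intros Ht. destruct (Req_dec t 0) as [E|E]. subst. rewrite sin_0. lra.
  destruct (MVT_gen (fun t => sin t - t * cos t) 0 t (fun t => t * sin t)) as [c [Hc Hm]].
  - intros x _. auto_derive; auto. ring.
  - intros x _. apply (cont_of_deriv _ _ (x * sin x)). auto_derive; auto. ring.
  - rewrite Rmin_left, Rmax_right in Hc by lra.
    rewrite sin_0, Rmult_0_l, Rminus_0_r, Rminus_0_r in Hm.
    assert (0 <= sin c) by (apply sin_ge_0; lra).
    assert (0 <= c * sin c * t) by (apply Rmult_le_pos; [apply Rmult_le_pos|]; lra). lra.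
Qed.

Lemma sinc_decr t1 t2 : 0 < t1 -> t1 <= t2 -> t2 <= PI -> sin t2 / t2 <= sin t1 / t1.
Proof.
  intros H1 H12 H2.
  destruct (MVT_gen (fun t => sin t / t) t1 t2 (fun t => (t * cos t - sin t) / t ^ 2)) as [c [Hc Hm]].
  - intros x Hx. rewrite Rmin_left, Rmax_right in Hx by lra. auto_derive. lra. field. lra.
  - intros x Hx. rewrite Rmin_left, Rmax_right in Hx by lra.
    apply (cont_of_deriv _ _ ((x * cos x - sin x) / x ^ 2)). auto_derive. lra. field. lra.
  - rewrite Rmin_left, Rmax_right in Hc by lra.
    pose proof (sin_tcos c ltac:(lra)).
    assert ((c * cos c - sin c) / c ^ 2 <= 0).
    { replace ((c * cos c - sin c) / c ^ 2) with (- ((sin c - c * cos c) / c ^ 2)) by (field; lra).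
      assert (0 <= (sin c - c * cos c) / c ^ 2) by (apply Rdiv_le_0_compat; nra). lra. }
    assert ((c * cos c - sin c) / c ^ 2 * (t2 - t1) <= 0) by nra. lra.
Qed.

Lemma gg_decr n sigma w1 w2 : (0 < n)%nat -> 0 <= sigma -> 0 < w1 -> w1 < w2 ->
  w2 * hh n <= PI -> gg n sigma w2 < gg n sigma w1.
Proof.
  intros Hn Hs H1 H12 H2. pose proof (hh_pos n Hn) as Hh.
  unfold gg.
  assert (cos (w2 * hh n) < cos (w1 * hh n)) by (apply cos_decreasing_1; nra).
  assert (E : forall w, 0 < w -> sin (w * hh n) / w = hh n * (sin (w * hh n) / (w * hh n))).
  { intros w Hw. field. split; lra. }
  rewrite (E w1), (E w2) by lra.
  pose proof (sinc_decr (w1 * hh n) (w2 * hh n) ltac:(nra) ltac:(nra) H2).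
  assert (hh n * (sin (w2 * hh n) / (w2 * hh n)) <= hh n * (sin (w1 * hh n) / (w1 * hh n))) by nra.
  nra.
Qed.

Lemma gg_ivt n sigma j : (2 <= n)%nat -> 0 <= sigma -> (1 <= j <= n - 1)%nat ->
  exists w, 0 < w /\ w * hh n < PI /\ gg n sigma w = cos (INR j * PI / INR n).
Proof.
  intros Hn Hs Hj. assert (Hn0 : (0 < n)%nat) by lia.
  pose proof (hh_pos n Hn0) as Hh. pose proof (lt_0_INR n Hn0) as HnR. pose proof PI_RGT_0.
  set (th := INR j * PI / INR n).
  assert (Hth : 0 < th < PI).
  { unfold th. assert (1 <= INR j) by (apply (le_INR 1); lia).
    assert (INR j <= INR n - 1) by (replace 1 with (INR 1) by reflexivity; rewrite <- (minus_INR n 1) by lia; apply le_INR; lia).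
    split. apply Rdiv_lt_0_compat; nra.
    apply Rmult_lt_reg_r with (INR n); auto. field_simplify; nra. }
  set (w0 := th / 2 / hh n). set (wm := PI / hh n).
  assert (Ew0 : w0 * hh n = th / 2) by (unfold w0; field; lra).
  assert (Ewm : wm * hh n = PI) by (unfold wm; field; lra).
  assert (Hw0 : 0 < w0) by (unfold w0; apply Rdiv_lt_0_compat; lra).
  assert (Hw0m : w0 < wm).
  { apply Rmult_lt_reg_r with (hh n); auto. lra. }
  destruct (Ranalysis5.IVT_interv (fun w => cos th - gg n sigma w) w0 wm) as [z [Hz Hfz]].
  - intros a Ha. apply (cont_of_deriv _ _ (- (- (hh n) * sin (a * hh n) +
        sigma * ((hh n * cos (a * hh n) * a - sin (a * hh n)) / a ^ 2) / 2))).
    unfold gg. auto_derive. lra. field. lra.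
  - exact Hw0m.
  - unfold gg. rewrite Ew0.
    assert (cos th < cos (th / 2)) by (apply cos_decreasing_1; lra).
    assert (0 <= sin (th / 2)) by (apply sin_ge_0; lra).
    assert (0 <= sin (th / 2) / w0) by (apply Rdiv_le_0_compat; lra).
    nra.
  - unfold gg. rewrite Ewm, sin_PI, cos_PI.
    assert (cos PI < cos th) by (apply cos_decreasing_1; lra). rewrite cos_PI in H0.
    unfold Rdiv. lra.
  - exists z. split; [lra|]. split.
    + destruct (Req_dec z wm) as [E|E].
      * exfalso. subst z. unfold gg in Hfz. rewrite Ewm, sin_PI, cos_PI in Hfz.
        assert (cos PI < cos th) by (apply cos_decreasing_1; lra). rewrite cos_PI in H0.
        unfold Rdiv in Hfz. lra.
      * assert (z < wm) by lra. nra.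
    + lra.
Qed.

Definition tf (w a A B x : R) := A * cos (w * (x - a)) + B * sin (w * (x - a)).

Lemma tf_deriv (w a A B x : R) : is_derive (tf w a A B) x (tf w a (w * B) (- w * A) x).
Proof. unfold tf. auto_derive; auto. unfold Rminus; ring. Qed.

Fixpoint cof (w : R) (j : nat) (A B : R) : R * R :=
  match j with
  | O => (A, B)
  | S j => let p := cof w j A B in (w * snd p, - w * fst p)
  end.

Lemma tf_Dn w a A B j : forall x, Derive_n (tf w a A B) j x =
   tf w a (fst (cof w j A B)) (snd (cof w j A B)) x.
Proof.
  induction j as [|j IH]; intro x. reflexivity.
  simpl Derive_n. rewrite (Derive_ext _ _ x IH).
  apply is_derive_unique. apply tf_deriv.
Qed.

Lemma tf_exn w a A B j x : ex_derive_n (tf w a A B) j x.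
Proof.
  destruct j. exact I. simpl ex_derive_n.
  apply (ex_derive_ext (fun t => tf w a (fst (cof w j A B)) (snd (cof w j A B)) t)).
  intro t; symmetry; apply tf_Dn. eexists; apply tf_deriv.
Qed.

Lemma tf_cont w a A B x : continuous (tf w a A B) x.
Proof. apply (ex_derive_continuous (V := R_NormedModule)). eexists; apply tf_deriv. Qed.

Lemma pw_cont (u f g : R -> R) x d : 0 < d ->
  (forall y, 0 <= y <= 1 -> x - d < y <= x -> u y = f y) ->
  (forall y, 0 <= y <= 1 -> x <= y < x + d -> u y = g y) ->
  continuous f x -> continuous g x -> f x = u x -> g x = u x ->
  filterlim u (within (fun y => 0 <= y <= 1) (locally x)) (locally (u x)).
Proof.
  intros Hd Hf Hg Cf Cg Ef Eg.
  apply filterlim_locally. intros eps.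
  destruct (cont_eps f x Cf eps) as [d1 H1]. destruct (cont_eps g x Cg eps) as [d2 H2].
  assert (Hm : 0 < Rmin d (Rmin d1 d2)).
  { pose proof (cond_pos d1); pose proof (cond_pos d2). repeat apply Rmin_glb_lt; lra. }
  exists (mkposreal _ Hm). intros y Hy Dy. assert (Hy2 : Rabs (y - x) < Rmin d (Rmin d1 d2)) by exact Hy. clear Hy. apply ball_R.
  pose proof (Rmin_l d (Rmin d1 d2)). pose proof (Rmin_r d (Rmin d1 d2)).
  pose proof (Rmin_l d1 d2). pose proof (Rmin_r d1 d2).
  assert (Ha : Rabs (y - x) < d /\ Rabs (y - x) < d1 /\ Rabs (y - x) < d2) by lra.
  destruct Ha as [Ha [Hb Hc]].
  destruct (Rle_dec y x) as [L|L].
  - rewrite Hf by (auto; apply Rabs_lt_between' in Ha; lra). rewrite <- Ef. auto.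
  - rewrite Hg by (auto; apply Rabs_lt_between' in Ha; lra). rewrite <- Eg. auto.
Qed.

Definition Vv th k := sin (INR k * th).
Definition Bc n w th k := (Vv th k - Vv th (k-1) * cos (w * hh n)) / sin (w * hh n).
Definition fk n w th k := tf w (xk n (k-1)) (Vv th (k-1)) (Bc n w th k).
Definition cellk n x := Z.to_nat (up (x * INR n)).
Definition ucons n w th x := fk n w th (cellk n x) x.

Lemma up_nat r k : INR k - 1 <= r < INR k -> Z.to_nat (up r) = k.
Proof.
  intros H. rewrite <- (tech_up r (Z.of_nat k)). apply Nat2Z.id.
  rewrite <- INR_IZR_INZ; lra. rewrite <- INR_IZR_INZ; lra.
Qed.

Lemma fk_left n w th k : (1 <= k)%nat -> fk n w th k (xk n (k - 1)) = Vv th (k - 1).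
Proof. intros _. unfold fk, tf. rewrite Rminus_diag, Rmult_0_r, cos_0, sin_0. ring. Qed.

Lemma fk_right n w th k : (0 < n)%nat -> (1 <= k)%nat -> sin (w * hh n) <> 0 ->
  fk n w th k (xk n k) = Vv th k.
Proof.
  intros Hn Hk Hs. unfold fk, tf, Bc. rewrite (xk_step n k Hn Hk). fold (hh n). field. auto.
Qed.

Lemma closed_cell n w th k x : (0 < n)%nat -> (1 <= k <= n)%nat -> sin (w * hh n) <> 0 ->
  xk n (k - 1) <= x <= xk n k -> ucons n w th x = fk n w th k x.
Proof.
  intros Hn Hk Hs Hx. unfold ucons. pose proof (lt_0_INR n Hn) as HnR.
  destruct (Req_dec x (xk n k)) as [E|E].
  - assert (Ec : cellk n x = S k).
    { unfold cellk. apply up_nat. rewrite E. unfold xk. rewrite S_INR.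
      replace (INR k / INR n * INR n) with (INR k) by (field; lra). lra. }
    rewrite Ec. rewrite E. rewrite fk_right by (auto; lia).
    pose proof (fk_left n w th (S k) ltac:(lia)) as L. replace (S k - 1)%nat with k in L by lia.
    auto.
  - assert (Ec : cellk n x = k).
    { unfold cellk. apply up_nat. unfold xk in Hx.
      rewrite minus_INR in Hx by lia. simpl INR in Hx.
      destruct Hx as [H1 H2].
      split.
      + apply Rmult_le_compat_r with (r := INR n) in H1; [|lra].
        replace ((INR k - 1) / INR n * INR n) with (INR k - 1) in H1 by (field; lra). lra.
      + assert (x < INR k / INR n) by (unfold xk in E; lra).
        apply Rmult_lt_compat_r with (r := INR n) in H; [|lra].
        replace (INR k / INR n * INR n) with (INR k) in H by (field; lra). lra. }
    rewrite Ec. reflexivity.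
Qed.

Lemma loc_cell n w th k x : (0 < n)%nat -> (1 <= k <= n)%nat -> sin (w * hh n) <> 0 ->
  xk n (k - 1) < x < xk n k -> locally x (fun t => fk n w th k t = ucons n w th t).
Proof.
  intros Hn Hk Hs Hx.
  assert (Hp : 0 < Rmin (x - xk n (k - 1)) (xk n k - x)) by (apply Rmin_glb_lt; lra).
  exists (mkposreal _ Hp). intros y Hy.
  assert (Hy2 : Rabs (y - x) < Rmin (x - xk n (k - 1)) (xk n k - x)) by exact Hy.
  pose proof (Rmin_l (x - xk n (k - 1)) (xk n k - x)). pose proof (Rmin_r (x - xk n (k - 1)) (xk n k - x)).
  apply Rabs_lt_between' in Hy2.
  symmetry. apply closed_cell; auto. lra.
Qed.

Lemma Dfk n w th k : forall x, Derive (fk n w th k) x =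
  tf w (xk n (k-1)) (w * Bc n w th k) (- w * Vv th (k-1)) x.
Proof. intro x. apply is_derive_unique. apply tf_deriv. Qed.

Lemma cons_eigen n sigma j w : (2 <= n)%nat -> 0 <= sigma -> (1 <= j <= n - 1)%nat ->
  0 < w -> w * hh n < PI -> gg n sigma w = cos (INR j * PI / INR n) ->
  is_eigenfunction n sigma (w ^ 2) (ucons n w (INR j * PI / INR n)).
Proof.
  intros Hn Hsg Hj Hw HwP Hg.
  assert (Hn0 : (0 < n)%nat) by lia.
  pose proof (hh_pos n Hn0) as Hh. pose proof (lt_0_INR n Hn0) as HnR. pose proof PI_RGT_0.
  set (th := INR j * PI / INR n) in *.
  assert (Hth : 0 < th < PI).
  { unfold th. assert (1 <= INR j) by (apply (le_INR 1); lia).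
    assert (INR j <= INR n - 1) by (replace 1 with (INR 1) by reflexivity; rewrite <- (minus_INR n 1) by lia; apply le_INR; lia).
    split. apply Rdiv_lt_0_compat; nra.
    apply Rmult_lt_reg_r with (INR n); auto. field_simplify; nra. }
  assert (Hs : 0 < sin (w * hh n)) by (apply sin_gt_0; nra).
  assert (Hs0 : sin (w * hh n) <> 0) by lra.
  set (u := ucons n w th).
  split; [|split; [|split; [|split; [|split]]]].
  -
    exists (xk n 1). split. apply xk_bounds; lia.
    assert (B1 : xk n (1 - 1) <= xk n 1 <= xk n 1) by (split; [left; apply (xk_lt n 1); lia | lra]).
    unfold u. rewrite (closed_cell n w th 1) by (first [exact B1 | auto | lia]).
    rewrite fk_right by (auto; lia). unfold Vv. simpl INR. rewrite Rmult_1_l.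
    apply Rgt_not_eq. apply sin_gt_0; lra.
  -
    intros x Hx. unfold u.
    assert (X1 : xk n 1 = hh n) by (unfold xk, hh; simpl INR; reflexivity).
    assert (Cl : forall k y, (1 <= k <= n)%nat -> xk n (k - 1) <= y <= xk n k ->
                 ucons n w th y = fk n w th k y) by (intros; apply closed_cell; auto).
    destruct (Req_dec x 0) as [E0|E0].
    + subst x. apply (pw_cont _ (fk n w th 1) (fk n w th 1) 0 (hh n) Hh).
      * intros y Hy Hy2. apply Cl. lia. simpl Nat.sub. rewrite xk_0, X1. lra.
      * intros y Hy Hy2. apply Cl. lia. simpl Nat.sub. rewrite xk_0, X1. lra.
      * apply tf_cont.
      * apply tf_cont.
      * symmetry; apply Cl. lia. simpl Nat.sub. rewrite xk_0, X1. lra.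
      * symmetry; apply Cl. lia. simpl Nat.sub. rewrite xk_0, X1. lra.
    + destruct (cover n x Hn0 Hx) as [k0 [Hk0 Hxk0]].
      assert (K : exists k, (1 <= k <= n)%nat /\ xk n (k - 1) < x <= xk n k).
      { destruct (Req_dec x (xk n (k0 - 1))) as [E|E].
        - destruct (Nat.eq_dec k0 1) as [E1|E1].
          + subst k0. simpl in E. rewrite xk_0 in E. contradiction.
          + exists (k0 - 1)%nat. split. lia. split; [|lra].
            pose proof (xk_lt n (k0 - 1) Hn0 ltac:(lia)). lra.
        - exists k0. split; auto. lra. }
      destruct K as [k [Hk [Hxa Hxb]]].
      assert (Hd1 : 0 < x - xk n (k - 1)) by lra.
      assert (Lft : forall y, 0 <= y <= 1 -> x - (x - xk n (k - 1)) < y <= x -> ucons n w th y = fk n w th k y).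
      { intros y Hy Hy2. apply Cl; auto. lra. }
      destruct (Rlt_dec x (xk n k)) as [L|L].
      * assert (Hd : 0 < Rmin (x - xk n (k - 1)) (xk n k - x)) by (apply Rmin_glb_lt; lra).
        pose proof (Rmin_l (x - xk n (k - 1)) (xk n k - x)). pose proof (Rmin_r (x - xk n (k - 1)) (xk n k - x)).
        apply (pw_cont _ (fk n w th k) (fk n w th k) x _ Hd).
        -- intros y Hy Hy2. apply Cl; auto. lra.
        -- intros y Hy Hy2. apply Cl; auto. lra.
        -- apply tf_cont.
        -- apply tf_cont.
        -- symmetry; apply Cl; auto; lra.
        -- symmetry; apply Cl; auto; lra.
      * assert (Ex : x = xk n k) by lra.
        destruct (Nat.eq_dec k n) as [En|En].
        -- subst k. rewrite xk_n in Ex by auto.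
           apply (pw_cont _ (fk n w th n) (fk n w th n) x _ Hd1).
           ++ intros y Hy Hy2. apply Cl; auto. lra.
           ++ intros y Hy Hy2. apply Cl; auto. rewrite xk_n by auto. lra.
           ++ apply tf_cont.
           ++ apply tf_cont.
           ++ symmetry; apply Cl; auto. rewrite xk_n by auto. lra.
           ++ symmetry; apply Cl; auto. rewrite xk_n by auto. lra.
        -- assert (Hst2 : xk n (S k) - xk n k = hh n) by (pose proof (xk_step n (S k) Hn0 ltac:(lia)) as X; replace (S k - 1)%nat with k in X by lia; exact X).
           assert (Hd : 0 < Rmin (x - xk n (k - 1)) (hh n)) by (apply Rmin_glb_lt; lra).
           pose proof (Rmin_l (x - xk n (k - 1)) (hh n)). pose proof (Rmin_r (x - xk n (k - 1)) (hh n)).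
           apply (pw_cont _ (fk n w th k) (fk n w th (S k)) x _ Hd).
           ++ intros y Hy Hy2. apply Cl; auto. lra.
           ++ intros y Hy Hy2. apply Cl. lia. replace (S k - 1)%nat with k by lia. lra.
           ++ apply tf_cont.
           ++ apply tf_cont.
           ++ symmetry; apply Cl; auto. lra.
           ++ symmetry; apply Cl. lia. replace (S k - 1)%nat with k by lia. lra.
  -
    intros k Hk x Hx. pose proof (loc_cell n w th k x Hn0 Hk Hs0 Hx) as L.
    split.
    + intro m. apply (ex_derive_n_ext_loc _ _ m x L). apply tf_exn.
    + unfold u. rewrite <- (Derive_n_ext_loc _ _ 2 x L). unfold fk. rewrite tf_Dn. simpl.
      rewrite (closed_cell n w th k x) by (auto; lra). unfold fk, tf. ring.
  -
    assert (B1 : xk n (1 - 1) <= 0 <= xk n 1) by (simpl; rewrite xk_0; split; [lra| apply xk_bounds; lia]).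
    unfold u. rewrite (closed_cell n w th 1 0) by (first [exact B1 | auto | lia]).
    pose proof (fk_left n w th 1 ltac:(lia)) as L. simpl Nat.sub in L. rewrite xk_0 in L. rewrite L.
    unfold Vv. simpl INR. rewrite Rmult_0_l. apply sin_0.
  -
    assert (B1 : xk n (n - 1) <= 1 <= xk n n) by (rewrite xk_n by auto; split; [apply xk_bounds; lia|lra]).
    unfold u. rewrite (closed_cell n w th n 1) by (first [exact B1 | auto | lia]).
    rewrite <- (xk_n n Hn0). rewrite fk_right by (auto; lia). unfold Vv.
    apply sin_eq_0_1. exists (Z.of_nat j). rewrite <- INR_IZR_INZ. unfold th. field. lra.
  -
    intros k Hk.
    assert (Hkl : xk n (k - 1) < xk n k) by (apply xk_lt; lia).
    assert (Hst : xk n k - xk n (k - 1) = hh n) by (apply xk_step; lia).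
    assert (Hst2 : xk n (S k) - xk n k = hh n) by (pose proof (xk_step n (S k) Hn0 ltac:(lia)) as X; replace (S k - 1)%nat with k in X by lia; exact X).
    exists (Derive (fk n w th k) (xk n k)), (Derive (fk n w th (S k)) (xk n k)).
    split; [|split].
    + apply (filterlim_ext_loc (Derive (fk n w th k))).
      * exists (mkposreal _ Hh). intros y Hy Hlt.
        assert (Hy2 : Rabs (y - xk n k) < hh n) by exact Hy. apply Rabs_lt_between' in Hy2.
        apply Derive_ext_loc. apply loc_cell; auto. lia. lra.
      * assert (CC : continuous (Derive (fk n w th k)) (xk n k)).
        { apply (continuous_ext (tf w (xk n (k-1)) (w * Bc n w th k) (- w * Vv th (k-1)))).
          intro t; symmetry; apply Dfk. apply tf_cont. }
        unfold at_left. eapply filterlim_filter_le_1. apply filter_le_within. exact CC.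
    + apply (filterlim_ext_loc (Derive (fk n w th (S k)))).
      * exists (mkposreal _ Hh). intros y Hy Hlt.
        assert (Hy2 : Rabs (y - xk n k) < hh n) by exact Hy. apply Rabs_lt_between' in Hy2.
        apply Derive_ext_loc. apply loc_cell; auto. lia. replace (S k - 1)%nat with k by lia. lra.
      * assert (CC : continuous (Derive (fk n w th (S k))) (xk n k)).
        { apply (continuous_ext (tf w (xk n (S k - 1)) (w * Bc n w th (S k)) (- w * Vv th (S k - 1)))).
          intro t; symmetry; apply Dfk. apply tf_cont. }
        unfold at_right. eapply filterlim_filter_le_1. apply filter_le_within. exact CC.
    + rewrite !Dfk. unfold u. rewrite (closed_cell n w th k); [| lia | lia | auto | lra].
      rewrite fk_right by (auto; lia).
      replace (S k - 1)%nat with k by lia. unfold tf. rewrite Hst, Rminus_diag, Rmult_0_r, cos_0, sin_0.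
      unfold Bc. replace (S k - 1)%nat with k by lia.
      assert (VS : Vv th (S k) = 2 * cos th * Vv th k - Vv th (k - 1)).
      { unfold Vv. replace (INR (S k) * th) with (INR k * th + th) by (rewrite S_INR; ring).
        replace (INR (k - 1) * th) with (INR k * th - th) by (rewrite minus_INR by lia; simpl; ring).
        rewrite sin_plus, sin_minus. ring. }
      rewrite VS, <- Hg. unfold gg.
      pose proof (sin2_cos2 (w * hh n)) as SC. unfold Rsqr in SC.
      set (s := sin (w * hh n)) in *. set (cs := cos (w * hh n)) in *.
      field_simplify; try lra.
      transitivity ((w * Vv th (k - 1) * (cs * cs + s * s - 1) + sigma * s * Vv th k) / s). field; lra.
      replace (cs * cs + s * s - 1) with 0 by lra. field. lra.
Qed.

Lemma cos_kPI k : cos (INR k * PI) = (-1) ^ k.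
Proof.
  induction k as [|k IH]. simpl. rewrite Rmult_0_l. apply cos_0.
  rewrite S_INR. replace ((INR k + 1) * PI) with (INR k * PI + PI) by ring.
  rewrite neg_cos, IH. simpl. ring.
Qed.

Lemma sin_kPI k : sin (INR k * PI) = 0.
Proof. apply sin_eq_0_1. exists (Z.of_nat k). rewrite INR_IZR_INZ. reflexivity. Qed.

Lemma int_cell (w a b A B N : R) : 0 < w -> w ^ 2 <> N ^ 2 ->
  RInt (fun x => tf w a A B x * sin (N * x)) a b =
  ((tf w a A B b * N * cos (N * b) - tf w a (w * B) (- w * A) b * sin (N * b)) -
   (tf w a A B a * N * cos (N * a) - tf w a (w * B) (- w * A) a * sin (N * a))) / (w ^ 2 - N ^ 2).
Proof.
  intros Hw HN.
  set (G := fun x => (tf w a A B x * N * cos (N * x) - tf w a (w * B) (- w * A) x * sin (N * x)) / (w ^ 2 - N ^ 2)).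
  assert (HD : forall x, is_derive G x (tf w a A B x * sin (N * x))).
  { intro x. unfold G, tf. auto_derive; auto. unfold Rminus. field.
    intro E. apply HN. lra. }
  assert (Hi : is_RInt (fun x => tf w a A B x * sin (N * x)) a b (minus (G b) (G a))).
  { apply (is_RInt_derive G). intros; apply HD.
    intros x _. apply (ex_derive_continuous (V := R_NormedModule)). eexists.
    unfold tf. auto_derive; auto. }
  rewrite (is_RInt_unique _ _ _ _ Hi).
  unfold G, minus, plus, opp; simpl. field. intro E; apply HN; lra.
Qed.

Lemma NPI_xk n k : (0 < n)%nat -> INR n * PI * xk n k = INR k * PI.
Proof. intros Hn. unfold xk. pose proof (lt_0_INR n Hn). field. lra. Qed.

Lemma F_formula n sigma lam u k : (2 <= n)%nat -> is_eigenfunction n sigma lam u -> 0 < lam ->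
  lam <> INR n ^ 2 * PI ^ 2 -> (1 <= k <= n)%nat ->
  Fk n k u = INR n * PI * (-1) ^ (k + 1) * (u (xk n k) + u (xk n (k - 1)))
                  / (INR n ^ 2 * PI ^ 2 - lam).
Proof.
  intros Hn He Hl HN Hk. assert (Hn0 : (0 < n)%nat) by lia.
  destruct (cell_rep n sigma lam u k Hn0 He Hk) as [be [R E]].
  set (a := xk n (k - 1)) in *. set (b := xk n k) in *.
  assert (Hab : a < b) by (apply xk_lt; lia).
  assert (Hw : 0 < sqrt lam) by (apply sqrt_lt_R0; lra).
  set (w := sqrt lam) in *.
  assert (Ew : w ^ 2 = lam) by (unfold w; rewrite <- Rsqr_pow2; apply Rsqr_sqrt; lra).
  assert (Htf : forall x, a < x < b -> u x = tf w a (u a) (be / w) x).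
  { intros x Hx. rewrite (proj1 (R x Hx)). unfold Cf, Sf, tf.
    destruct (Rlt_dec 0 lam); [|lra]. fold w. field. lra. }
  unfold Fk. fold a b.
  rewrite (RInt_ext _ (fun x => tf w a (u a) (be / w) x * sin (INR n * PI * x))).
  2:{ intros x Hx. rewrite Rmin_left, Rmax_right in Hx by lra. rewrite Htf by auto. reflexivity. }
  rewrite int_cell; auto. 2:{ rewrite Ew. replace ((INR n * PI) ^ 2) with (INR n ^ 2 * PI ^ 2) by ring. auto. }
  unfold a, b. rewrite !NPI_xk by auto. fold a b.
  rewrite !sin_kPI, !cos_kPI.
  assert (Eb : tf w a (u a) (be / w) b = u b).
  { rewrite E. unfold tf, Cf, Sf. destruct (Rlt_dec 0 lam); [|lra]. fold w.
    unfold b, a. rewrite (xk_step n k Hn0 ltac:(lia)). fold (hh n). field. lra. }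
  assert (Ea : tf w a (u a) (be / w) a = u a).
  { unfold tf. rewrite Rminus_diag, Rmult_0_r, cos_0, sin_0. ring. }
  rewrite Ea, Eb, Ew.
  destruct k as [|k]; [lia|]. replace (S k - 1)%nat with k by lia.
  replace (S k + 1)%nat with (S (S k)) by lia.
  assert (lam - (INR n * PI) ^ 2 <> 0) by (intro X; apply HN; lra).
  assert (INR n ^ 2 * PI ^ 2 - lam <> 0) by (intro X; apply HN; lra).
  simpl pow. field. split; intro X; apply HN; lra.
Qed.

Lemma cos_idx n j1 j2 : (0 < n)%nat -> (j1 < j2)%nat -> (j2 <= n)%nat ->
  cos (INR j2 * PI / INR n) < cos (INR j1 * PI / INR n).
Proof.
  intros Hn H12 H2. pose proof (lt_0_INR n Hn). pose proof PI_RGT_0.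
  pose proof (lt_INR _ _ H12). pose proof (le_INR _ _ H2). pose proof (pos_INR j1).
  apply cos_decreasing_1.
  - apply Rdiv_le_0_compat; nra.
  - apply Rmult_le_reg_r with (INR n); auto. field_simplify; nra.
  - apply Rdiv_le_0_compat; nra.
  - apply Rmult_le_reg_r with (INR n); auto. field_simplify; nra.
  - apply Rmult_lt_reg_r with (INR n); auto. field_simplify; nra.
Qed.

Lemma exist_eig n sigma j : (2 <= n)%nat -> 0 <= sigma -> (1 <= j <= n - 1)%nat ->
  exists mu, 0 < mu < INR n ^ 2 * PI ^ 2 /\ is_eigenvalue n sigma mu /\
    cc n sigma mu = cos (INR j * PI / INR n).
Proof.
  intros Hn Hs Hj. destruct (gg_ivt n sigma j Hn Hs Hj) as [w [Hw [HwP Hg]]].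
  assert (Hn0 : (0 < n)%nat) by lia. pose proof (lt_0_INR n Hn0).
  exists (w ^ 2). split; [split|split].
  - nra.
  - unfold hh in HwP. assert (w < INR n * PI).
    { apply Rmult_lt_reg_r with (1 / INR n). apply Rdiv_lt_0_compat; lra.
      replace (INR n * PI * (1 / INR n)) with PI by (field; lra). lra. }
    pose proof PI_RGT_0. nra.
  - exists (ucons n w (INR j * PI / INR n)). apply cons_eigen; auto.
  - rewrite cc_gg by nra. rewrite <- Rsqr_pow2, sqrt_Rsqr by lra. auto.
Qed.

Lemma cc_mono n sigma m1 m2 : (0 < n)%nat -> 0 <= sigma -> 0 < m1 -> m1 < m2 ->
  m2 < INR n ^ 2 * PI ^ 2 -> cc n sigma m2 < cc n sigma m1.
Proof.
  intros Hn Hs H1 H12 H2. rewrite !cc_gg by lra.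
  apply gg_decr; auto. apply sqrt_lt_R0; lra. apply sqrt_lt_1; lra.
  pose proof (lam_small n m2 Hn H2). pose proof (hh_pos n Hn). pose proof PI_RGT_0.
  assert (Hs2 : 0 < sqrt m2) by (apply sqrt_lt_R0; lra).
  assert ((sqrt m2 * hh n) ^ 2 < PI ^ 2).
  { replace ((sqrt m2 * hh n) ^ 2) with (sqrt m2 * sqrt m2 * hh n ^ 2) by ring.
    rewrite sqrt_sqrt; lra. }
  nra.
Qed.

Lemma build n sigma J : (2 <= n)%nat -> 0 <= sigma -> (J <= n - 1)%nat ->
  exists l, NoDup l /\ length l = J /\
   (forall mu, In mu l -> is_eigenvalue n sigma mu /\ 0 < mu < INR n ^ 2 * PI ^ 2 /\
        exists j, (1 <= j <= J)%nat /\ cc n sigma mu = cos (INR j * PI / INR n)) /\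
   (forall j, (1 <= j <= J)%nat -> exists mu, In mu l /\ cc n sigma mu = cos (INR j * PI / INR n)).
Proof.
  intros Hn Hs. induction J as [|J IH]; intros HJ.
  - exists nil. split. constructor. split. reflexivity. split. intros mu []. intros j Hj; lia.
  - destruct (IH ltac:(lia)) as [l [Hnd [Hlen [H1 H2]]]].
    destruct (exist_eig n sigma (S J) Hn Hs ltac:(lia)) as [mu [Hmu [Hev Hc]]].
    exists (mu :: l). split; [|split; [|split]].
    + constructor; auto. intro Hin. destruct (H1 mu Hin) as [_ [_ [j [Hj Hcj]]]].
      rewrite Hc in Hcj. pose proof (cos_idx n j (S J) ltac:(lia) ltac:(lia) ltac:(lia)). lra.
    + simpl. lia.
    + intros mu' [E|Hin]. subst mu'. split; auto. split; auto. exists (S J). split; auto; lia.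
      destruct (H1 mu' Hin) as [A1 [A2 [j [Hj Hcj]]]]. split; auto. split; auto. exists j. split; auto; lia.
    + intros j Hj. destruct (Nat.eq_dec j (S J)) as [E|E].
      * subst. exists mu. split; auto. left; auto.
      * destruct (H2 j ltac:(lia)) as [mu' [Hin Hc']]. exists mu'. split; auto. right; auto.
Qed.

Lemma mth_char n sigma m lam : (2 <= n)%nat -> (1 <= m <= n - 1)%nat -> 0 <= sigma ->
  is_mth_eigenvalue n sigma m lam ->
  0 < lam < INR n ^ 2 * PI ^ 2 /\ cc n sigma lam = cos (INR m * PI / INR n).
Proof.
  intros Hn Hm Hs [[u Hu] [l [Hnd [Hlen Hl]]]].
  assert (Hn0 : (0 < n)%nat) by lia.
  assert (HA : lam < INR n ^ 2 * PI ^ 2).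
  { destruct (Rlt_dec lam (INR n ^ 2 * PI ^ 2)) as [L|L]; auto. exfalso.
    destruct (build n sigma (n - 1) Hn Hs ltac:(lia)) as [l' [Hnd' [Hlen' [H1 _]]]].
    assert (incl l' l).
    { intros mu Hin. apply Hl. destruct (H1 mu Hin) as [A1 [A2 _]]. split; auto. lra. }
    pose proof (NoDup_incl_length Hnd' H). lia. }
  destruct (eig_class n sigma lam u Hn Hs Hu HA) as [Hpos [j [Hj Hcj]]].
  split; [split; auto|].
  assert (J1 : (j - 1 <= m - 1)%nat).
  { destruct (build n sigma (j - 1) Hn Hs ltac:(lia)) as [l' [Hnd' [Hlen' [H1 _]]]].
    assert (incl l' l).
    { intros mu Hin. apply Hl. destruct (H1 mu Hin) as [A1 [A2 [j' [Hj' Hc']]]]. split; auto.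
      destruct (Rlt_dec mu lam) as [L|L]; auto. exfalso.
      assert (cc n sigma lam < cc n sigma mu).
      { rewrite Hcj, Hc'. apply cos_idx; lia. }
      destruct (Req_dec mu lam) as [E|E]. subst; lra.
      pose proof (cc_mono n sigma lam mu Hn0 Hs Hpos ltac:(lra) ltac:(lra)). lra. }
    pose proof (NoDup_incl_length Hnd' H). lia. }
  assert (J2 : (m - 1 <= j - 1)%nat).
  { destruct (build n sigma (j - 1) Hn Hs ltac:(lia)) as [l' [Hnd' [Hlen' [H1 H2]]]].
    assert (incl l l').
    { intros mu Hin. destruct (proj1 (Hl mu) Hin) as [[v Hv] Hlt].
      destruct (eig_class n sigma mu v Hn Hs Hv ltac:(lra)) as [Hmp [j' [Hj' Hc']]].
      assert (Hgt : cc n sigma lam < cc n sigma mu) by (apply cc_mono; auto).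
      assert (Hj'j : (j' < j)%nat).
      { destruct (Nat.lt_ge_cases j' j) as [L|L]; auto. exfalso.
        rewrite Hcj, Hc' in Hgt. destruct (Nat.eq_dec j' j). subst; lra.
        pose proof (cos_idx n j j' Hn0 ltac:(lia) ltac:(lia)). lra. }
      destruct (H2 j' ltac:(lia)) as [mu' [Hin' Hc'']].
      destruct (H1 mu' Hin') as [_ [Hmu' _]].
      assert (mu = mu').
      { destruct (Rtotal_order mu mu') as [L|[E|L]]; auto; exfalso.
        - pose proof (cc_mono n sigma mu mu' Hn0 Hs Hmp L ltac:(lra)). lra.
        - pose proof (cc_mono n sigma mu' mu Hn0 Hs ltac:(lra) L ltac:(lra)). lra. }
      subst; auto. }
    pose proof (NoDup_incl_length Hnd H). lia. }
  replace m with j by lia. auto.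
Qed.

Lemma Fk_ratio n m sigma lam u k : (2 <= n)%nat -> (1 <= m <= n - 1)%nat -> 0 <= sigma ->
  is_mth_eigenvalue n sigma m lam -> is_eigenfunction n sigma lam u -> (1 <= k <= n)%nat ->
  Fk n k u = Fk n 1 u * ((-1) ^ (k + 1) *
     (P (cos (INR m * PI / INR n)) k + P (cos (INR m * PI / INR n)) (k - 1))).
Proof.
  intros Hn Hm Hs Hmth He Hk.
  destruct (mth_char n sigma m lam Hn Hm Hs Hmth) as [[Hp HA] Hc].
  destruct (eig_U1 n sigma lam u Hn He HA) as [U1 [_ SP]].
  rewrite Hc in SP.
  assert (HN : lam <> INR n ^ 2 * PI ^ 2) by lra.
  rewrite (F_formula n sigma lam u k Hn He Hp HN Hk).
  rewrite (F_formula n sigma lam u 1 Hn He Hp HN ltac:(lia)).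
  rewrite (SP k) by lia. rewrite (SP (k - 1)%nat) by lia.
  simpl Nat.sub. rewrite xk_0. destruct He as [_ [_ [_ [H0 _]]]]. rewrite H0.
  assert (INR n ^ 2 * PI ^ 2 - lam <> 0) by lra.
  simpl pow. field. intro X; apply H; simpl; lra.
Qed.

Theorem corollary1p3 (n m : nat) (Hn : (2 <= n)%nat) (Hm : (1 <= m <= n - 1)%nat) :
  (forall (sigma lam : R) (u : R -> R),
     0 <= sigma -> is_mth_eigenvalue n sigma m lam -> is_eigenfunction n sigma lam u ->
     forall k : nat, (1 <= k <= n)%nat ->
       Fk n k u = INR n * PI * (-1) ^ (k + 1) * (u (xk n k) + u (xk n (k - 1)))
                  / (INR n ^ 2 * PI ^ 2 - lam)) /\
  (forall (sigma lam : R) (u : R -> R),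
     0 <= sigma -> is_mth_eigenvalue n sigma m lam -> is_eigenfunction n sigma lam u ->
     Fk n 1 u <> 0) /\
  (forall (sigma1 sigma2 lam1 lam2 : R) (u1 u2 : R -> R),
     0 <= sigma1 -> 0 <= sigma2 ->
     is_mth_eigenvalue n sigma1 m lam1 -> is_eigenfunction n sigma1 lam1 u1 ->
     is_mth_eigenvalue n sigma2 m lam2 -> is_eigenfunction n sigma2 lam2 u2 ->
     Fk n 1 u1 = 1 -> Fk n 1 u2 = 1 ->
     forall k : nat, (1 <= k <= n)%nat -> Fk n k u1 = Fk n k u2).
Proof.
  split; [|split].
  - intros sigma lam u Hs Hmth He k Hk.
    destruct (mth_char n sigma m lam Hn Hm Hs Hmth) as [[Hp HA] _].
    apply (F_formula n sigma lam u k Hn He Hp ltac:(lra) Hk).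
  - intros sigma lam u Hs Hmth He.
    destruct (mth_char n sigma m lam Hn Hm Hs Hmth) as [[Hp HA] _].
    destruct (eig_U1 n sigma lam u Hn He HA) as [U1 _].
    rewrite (F_formula n sigma lam u 1 Hn He Hp ltac:(lra) ltac:(lia)).
    simpl Nat.sub. rewrite xk_0. destruct He as [_ [_ [_ [H0 _]]]]. rewrite H0.
    assert (INR n ^ 2 * PI ^ 2 - lam <> 0) by lra.
    pose proof (lt_0_INR n ltac:(lia)). pose proof PI_RGT_0.
    assert (Hq : INR n * PI * (-1) ^ (1 + 1) * (u (xk n 1) + 0) <> 0).
    { replace (INR n * PI * (-1) ^ (1 + 1) * (u (xk n 1) + 0)) with ((INR n * PI) * u (xk n 1)) by (simpl; ring).
      apply Rmult_integral_contrapositive_currified; auto. nra. }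
    unfold Rdiv. apply Rmult_integral_contrapositive_currified; auto.
    apply Rinv_neq_0_compat. auto.
  - intros s1 s2 l1 l2 u1 u2 Hs1 Hs2 M1 E1 M2 E2 F1 F2 k Hk.
    rewrite (Fk_ratio n m s1 l1 u1 k), (Fk_ratio n m s2 l2 u2 k) by auto.
    rewrite F1, F2. reflexivity.
Qed.
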